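(* Consider an instance of the bicriteria asymmetric traveling salesman problem (bi-ATSP) with tour set $\mathcal{C}$, vector criterion $D=(D_1,D_2)$, outcome set $\mathcal{D}=D(\mathcal{C})$, and $\mathcal{D}_i=D_i(\mathcal{C})$ for $i=1,2$. Suppose that $$P(\mathcal{D}) = \bigcup_{i=1}^p \{ (y_1, y_2): y_2 = a_i - k y_1,\ y_1 \in \mathcal{D}_1,\ y_2 \in \mathcal{D}_2 \},$$ where $a_1,\dots,a_p>0$ and $k>0$ are constants. If criterion $D_1$ is more important than criterion $D_2$ with coefficient of relative importance $\theta'$ and $\theta' \geqslant k/(k+1)$ (and $\hat P(\mathcal{D})$ is the reduced Pareto set with $i=1$, $j=2$, $\theta=\theta'$), or criterion $D_2$ is more important than criterion $D_1$ with coefficient of relative importance $\theta''$ and $\theta'' \geqslant 1/(k+1)$ (and $\hat P(\mathcal{D})$ is the reduced Pareto set with $i=2$, $j=1$, $\theta=\theta''$), then $|\hat{P}(\mathcal{D})| \leqslant p$.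
   Context: Bi-ATSP: given a complete directed graph $G=(V,E)$ on $n$ vertices, each arc $e\in E$ carries a weight vector $d(e)=(d_1(e),d_2(e))$ of positive numbers. $\mathcal{C}$ is the set of all $(n-1)!$ Hamiltonian circuits (tours) of $G$, and for a tour $C$, $D(C)=(D_1(C),D_2(C))$ with $D_j(C)=\sum_{e\in C} d_j(e)$. For vectors $y^*,y$, write $y^*\leq y$ if $y^*\neq y$ and $y^*_s\leqslant y_s$ for every coordinate $s$ (Pareto relation). For a vector criterion $F$ on $\mathcal{C}$, the set of pareto-optimal tours is $P_F(\mathcal{C})=\{C\in\mathcal{C}: \nexists C^*\in\mathcal{C},\ F(C^* )\leq F(C)\}$. The Pareto set is $P(\mathcal{D})=\{y\in\mathcal{D}: \nexists y^*\in\mathcal{D},\ y^*\leq y\}$. Reduced Pareto set: if criterion $D_i$ is declared more important than criterion $D_j$ ($\{i,j\}=\{1,2\}$) with coefficient of relative importance $\theta\in(0,1)$, define the new criterion $\hat D$ by $\hat D_j=\theta D_i+(1-\theta)D_j$ and $\hat D_i=D_i$, and set $\hat{P}(\mathcal{D})=D(P_{\hat D}(\mathcal{C}))$ (a subset of $P(\mathcal{D})$). *)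

(* Defs.v *)
From HB Require Import structures.
From mathcomp Require Import all_boot all_order all_algebra all_fingroup.
Set Implicit Arguments. Unset Strict Implicit. Unset Printing Implicit Defensive.
Import Order.TTheory GRing.Theory Num.Theory.
Local Open Scope ring_scope.

Section BiATSP.
Variables (R : realFieldType) (n : nat).

(* A Hamiltonian circuit of the complete digraph on 'I_n is encoded by its
   successor permutation s: the tour uses the arcs (v, s v).  s is a tour
   iff it is a single cycle through all vertices without loops. *)
Definition is_tour (s : {perm 'I_n}) : bool :=
  [forall v, porbit s v == [set: 'I_n]] && [forall v, s v != v].

Definition tour_weight (d : 'I_n -> 'I_n -> R) (s : {perm 'I_n}) : R :=
  \sum_(v : 'I_n) d v (s v).

Definition pdom (y' y : R * R) : bool :=
  [&& y' != y, y'.1 <= y.1 & y'.2 <= y.2].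

Definition pareto_tours (F : {perm 'I_n} -> R * R) : pred {perm 'I_n} :=
  [pred C | is_tour C && ~~ [exists C', is_tour C' && pdom (F C') (F C)]].

Definition outcome (F : {perm 'I_n} -> R * R) (y : R * R) : Prop :=
  exists2 C, is_tour C & F C = y.

Definition pareto_set (F : {perm 'I_n} -> R * R) (y : R * R) : Prop :=
  outcome F y /\ ~ (exists y', outcome F y' /\ pdom y' y).

(* The image F'(S) of a set S of tours, as a duplicate-free list;
   its size is the cardinality. *)
Definition image_of (F' : {perm 'I_n} -> R * R) (S : pred {perm 'I_n}) : seq (R * R) :=
  undup [seq F' C | C <- enum S].

Definition critD (d1 d2 : 'I_n -> 'I_n -> R) (C : {perm 'I_n}) : R * R :=
  (tour_weight d1 C, tour_weight d2 C).

(* D_1 more important than D_2 with coefficient theta. *)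
Definition hatD12 d1 d2 (theta : R) (C : {perm 'I_n}) : R * R :=
  (tour_weight d1 C, theta * tour_weight d1 C + (1 - theta) * tour_weight d2 C).

(* D_2 more important than D_1 with coefficient theta. *)
Definition hatD21 d1 d2 (theta : R) (C : {perm 'I_n}) : R * R :=
  (theta * tour_weight d2 C + (1 - theta) * tour_weight d1 C, tour_weight d2 C).

Definition reduced12 d1 d2 theta : seq (R * R) :=
  image_of (critD d1 d2) (pareto_tours (hatD12 d1 d2 theta)).
Definition reduced21 d1 d2 theta : seq (R * R) :=
  image_of (critD d1 d2) (pareto_tours (hatD21 d1 d2 theta)).

End BiATSP.

(* Main.v *)
Require Import Defs.
From HB Require Import structures.
From mathcomp Require Import all_boot all_order all_algebra all_fingroup.
From mathcomp Require Import lra.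
Import Order.TTheory GRing.Theory Num.Theory.
Local Open Scope ring_scope.

Lemma size_inj_ord (T : eqType) (p : nat) (s : seq T) (f : T -> 'I_p) :
  uniq s -> {in s &, injective f} -> (size s <= p)%N.
Proof.
move=> us inj.
rewrite -(size_map f); apply: leq_trans (_ : size (enum 'I_p) <= p)%N; last by rewrite size_enum_ord.
apply: uniq_leq_size; first by rewrite map_inj_in_uniq.
by move=> x _; rewrite mem_enum.
Qed.

Lemma key (R : realFieldType) (n : nat)
  (d1 d2 : 'I_n -> 'I_n -> R) (p : nat) (a : 'I_p -> R) (k : R)
  (hP : forall y : R * R,
      pareto_set (critD d1 d2) y <->
      exists i : 'I_p,
        [/\ y.2 = a i - k * y.1,
            (exists2 C, is_tour C & tour_weight d1 C = y.1) &
            (exists2 C, is_tour C & tour_weight d2 C = y.2)])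
  (g : R * R -> R * R)
  (H1 : forall y y', pdom y' y -> pdom (g y') (g y))
  (H2 : forall y y' i, y.2 = a i - k * y.1 -> y'.2 = a i - k * y'.1 ->
        y != y' -> pdom (g y) (g y') || pdom (g y') (g y)) :
  (size (image_of (critD d1 d2) (pareto_tours (fun C => g (critD d1 d2 C)))) <= p)%N.
Proof.
set s := image_of _ _.
have memS : forall y, y \in s -> exists2 C,
    pareto_tours (fun C => g (critD d1 d2 C)) C & critD d1 d2 C = y.
  move=> y; rewrite mem_undup => /mapP [C]; rewrite mem_enum => HC ->.
  by exists C.
have online : forall y, y \in s -> exists i : 'I_p, y.2 == a i - k * y.1.
  move=> y /memS [C HC <-].
  have : pareto_set (critD d1 d2) (critD d1 d2 C).
    move/andP: HC => [tC nex]; split; first by exists C.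
    move=> [y' [[C' tC' <-] dom]].
    move/negP: nex; apply; apply/existsP; exists C'; rewrite tC' /=.
    exact: H1.
  by move/hP => [i [e _ _]]; exists i; apply/eqP.
have us : uniq s := undup_uniq _.
case: s us online memS => [|y0 s'] us online memS; first by [].
have [i0 _] := online y0 (mem_head _ _).
pose f y := odflt i0 [pick i | y.2 == a i - k * y.1].
have fP : forall y, y \in y0 :: s' -> y.2 = a (f y) - k * y.1.
  move=> y ys; rewrite /f; case: pickP => [i /eqP //|none].
  by have [i /negP] := online y ys; rewrite none.
apply: (@size_inj_ord _ _ _ f); first exact: us.
move=> y y' ys y's efy; apply/eqP/negP => /negP ne.
have [C /andP [tC nC] eC] := memS y ys.
have [C' /andP [tC' nC'] eC'] := memS y' y's.
have := H2 y y' (f y) (fP y ys) _ ne; rewrite efy => /(_ (fP y' y's)).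
case/orP => dom.
  by move/negP: nC'; apply; apply/existsP; exists C; rewrite tC eC eC'.
by move/negP: nC; apply; apply/existsP; exists C'; rewrite tC' eC eC'.
Qed.

Lemma pdomE (R : realFieldType) (a b c d : R) :
  pdom (a, b) (c, d) = [&& ~~ ((a == c) && (b == d)), a <= c & b <= d].
Proof. by rewrite /pdom xpair_eqE. Qed.

Theorem corollary1 (R : realFieldType) (n : nat)
  (d1 d2 : 'I_n -> 'I_n -> R)
  (hd1 : forall u v : 'I_n, u != v -> 0 < d1 u v)
  (hd2 : forall u v : 'I_n, u != v -> 0 < d2 u v)
  (p : nat) (a : 'I_p -> R) (k : R)
  (ha : forall i, 0 < a i) (hk : 0 < k)
  (hP : forall y : R * R,
      pareto_set (critD d1 d2) y <->
      exists i : 'I_p,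
        [/\ y.2 = a i - k * y.1,
            (exists2 C, is_tour C & tour_weight d1 C = y.1) &
            (exists2 C, is_tour C & tour_weight d2 C = y.2)]) :
  (forall theta' : R, 0 < theta' < 1 -> k / (k + 1) <= theta' ->
     (size (reduced12 d1 d2 theta') <= p)%N) /\
  (forall theta'' : R, 0 < theta'' < 1 -> 1 / (k + 1) <= theta'' ->
     (size (reduced21 d1 d2 theta'') <= p)%N).
Proof.
have k1 : 0 < k + 1 by lra.
split=> th /andP [th0 th1]; rewrite ler_pdivrMr // => hth.
- apply: (@key R n d1 d2 p a k hP (fun y => (y.1, th * y.1 + (1 - th) * y.2))).
  + move=> [x1 x2] [z1 z2] /=; rewrite !pdomE => /and3P [ne l1 l2].
    apply/and3P; split => //; last by nra.
    apply/negP => /andP [/eqP e1 /eqP e2]; move/negP: ne; apply.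
    rewrite e1 eqxx /=; apply/eqP.
    have : (1 - th) * (z2 - x2) = 0 by rewrite e1 in e2; lra.
    by move/eqP; rewrite mulf_eq0 => /orP [/eqP|/eqP]; lra.
  + move=> [x1 x2] [z1 z2] i /= e1 e2; rewrite xpair_eqE !pdomE => ne.
    have [c|c|c] : [\/ x1 < z1, z1 < x1 | x1 = z1] by case: ltgtP => h; [apply: Or31|apply: Or32|apply: Or33].
    * apply/orP; left; apply/and3P; split; [|lra|].
        2: have h0 : 0 <= z1 - x1 by lra.
        2: have h1 : 0 <= th * (k + 1) - k by lra.
        2: have h := mulr_ge0 h0 h1; rewrite e1 e2; nra.
      by apply/negP => /andP [/eqP E _]; lra.
    * apply/orP; right; apply/and3P; split; [|lra|].
        2: have h0 : 0 <= x1 - z1 by lra.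
        2: have h1 : 0 <= th * (k + 1) - k by lra.
        2: have h := mulr_ge0 h0 h1; rewrite e1 e2; nra.
      by apply/negP => /andP [/eqP E _]; lra.
    * by move: ne; rewrite c eqxx e1 e2 c eqxx.
- apply: (@key R n d1 d2 p a k hP (fun y => (th * y.2 + (1 - th) * y.1, y.2))).
  + move=> [x1 x2] [z1 z2] /=; rewrite !pdomE => /and3P [ne l1 l2].
    apply/and3P; split => //; first last; first by nra.
    apply/negP => /andP [/eqP e1 /eqP e2]; move/negP: ne; apply.
    rewrite e2 eqxx andbT; apply/eqP.
    have : (1 - th) * (z1 - x1) = 0 by rewrite e2 in e1; lra.
    by move/eqP; rewrite mulf_eq0 => /orP [/eqP|/eqP]; lra.
  + move=> [x1 x2] [z1 z2] i /= e1 e2; rewrite xpair_eqE !pdomE => ne.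
    have [c|c|c] : [\/ x2 < z2, z2 < x2 | x2 = z2] by case: ltgtP => h; [apply: Or31|apply: Or32|apply: Or33].
    * apply/orP; left; apply/and3P; split; [|nra|lra].
      by apply/negP => /andP [_ /eqP E]; lra.
    * apply/orP; right; apply/and3P; split; [|nra|lra].
      by apply/negP => /andP [_ /eqP E]; lra.
    * have c1 : x1 = z1.
        have : k * (x1 - z1) = 0 by lra.
        by move/eqP; rewrite mulf_eq0 => /orP [/eqP|/eqP]; lra.
      by move: ne; rewrite c c1 !eqxx.
Qed.
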